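(* Under the standing assumptions below, suppose there exists $m_1\in M$ such that $\phi\left(\left[\begin{smallmatrix} 1 & m_1\\ 0 & 0\end{smallmatrix}\right]\right)$ is a type 2 idempotent of $T'$. Then (a) $\phi$ maps every idempotent of the form $\left[\begin{smallmatrix} 1 & m\\ 0 & 0\end{smallmatrix}\right]$ ($m\in M$) to a type 2 idempotent; and (b) there exist a fixed element $a'_2\in M'$ and a map $v_2:M\to N'$ such that $\phi\left(\left[\begin{smallmatrix} 1 & m\\ 0 & 0\end{smallmatrix}\right]\right)=\left[\begin{smallmatrix} 0 & a'_2\\ v_2(m) & 1\end{smallmatrix}\right]$ for all $m\in M$.
   Context: All rings have an identity $1\neq 0$. Standing assumptions: $R,S,R',S'$ are rings whose only idempotents are $0$ and $1$; $M$ is an $R$-$S$-bimodule, $N$ an $S$-$R$-bimodule, $M'$ an $R'$-$S'$-bimodule, $N'$ an $S'$-$R'$-bimodule; $T=\left[\begin{smallmatrix} R & M\\ N & S\end{smallmatrix}\right]$ and $T'=\left[\begin{smallmatrix} R' & M'\\ N' & S'\end{smallmatrix}\right]$ are the Morita context rings with both Morita maps zero, i.e. the sets of formal matrices with entrywise addition and product $\left[\begin{smallmatrix} r & m\\ n & s\end{smallmatrix}\right]\left[\begin{smallmatrix} r' & m'\\ n' & s'\end{smallmatrix}\right]=\left[\begin{smallmatrix} rr' & rm'+ms'\\ nr'+sn' & ss'\end{smallmatrix}\right]$; and $\phi:T\to T'$ is a ring isomorphism. Under these assumptions every idempotent of $T$ (or $T'$) other than $0$ and $1$ has one of the forms $\left[\begin{smallmatrix}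 1 & m\\ n & 0\end{smallmatrix}\right]$ (called a type 1 idempotent) or $\left[\begin{smallmatrix} 0 & m\\ n & 1\end{smallmatrix}\right]$ (called a type 2 idempotent). *)

(* Defs.v *)
From HB Require Import structures.
From mathcomp Require Import all_boot all_algebra.
Set Implicit Arguments. Unset Strict Implicit. Unset Printing Implicit Defensive.
Import GRing.Theory.
Local Open Scope ring_scope.

Definition only_trivial_idem (R : nzRingType) : Prop :=
  forall r : R, r * r = r -> r = 0 \/ r = 1.

Definition is_bimod (R S : nzRingType) (M : zmodType)
  (l : R -> M -> M) (r : M -> S -> M) : Prop :=
  (forall a m1 m2, l a (m1 + m2) = l a m1 + l a m2) /\
  (forall a b m, l (a + b) m = l a m + l b m) /\
  (forall a b m, l (a * b) m = l a (l b m)) /\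
  (forall m, l 1 m = m) /\
  (forall m1 m2 s, r (m1 + m2) s = r m1 s + r m2 s) /\
  (forall m s t, r m (s + t) = r m s + r m t) /\
  (forall m s t, r m (s * t) = r (r m s) t) /\
  (forall m, r m 1 = m) /\
  (forall a m s, r (l a m) s = l a (r m s)).

(* Elements of the Morita context ring [[R, M], [N, S]] (zero Morita maps). *)
Record mctx (R S : nzRingType) (M N : zmodType) := MCtx {
  m11 : R; m12 : M; m21 : N; m22 : S }.

Section MoritaOps.
Variables (R S : nzRingType) (M N : zmodType).
Variables (lM : R -> M -> M) (rM : M -> S -> M).
Variables (lN : S -> N -> N) (rN : N -> R -> N).

Definition mctx_add (x y : mctx R S M N) : mctx R S M N :=
  MCtx (m11 x + m11 y) (m12 x + m12 y) (m21 x + m21 y) (m22 x + m22 y).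

(* [[r,m],[n,s]] [[r',m'],[n',s']]
   = [[r r', r m' + m s'], [n r' + s n', s s']] *)
Definition mctx_mul (x y : mctx R S M N) : mctx R S M N :=
  MCtx (m11 x * m11 y)
       (lM (m11 x) (m12 y) + rM (m12 x) (m22 y))
       (rN (m21 x) (m11 y) + lN (m22 x) (m21 y))
       (m22 x * m22 y).

Definition mctx_one : mctx R S M N := MCtx 1 0 0 1.

Definition mctx_idem (x : mctx R S M N) : Prop := mctx_mul x x = x.

Definition type2_idem (x : mctx R S M N) : Prop :=
  mctx_idem x /\ exists (m : M) (n : N), x = MCtx 0 m n 1.

Definition type1_idem (x : mctx R S M N) : Prop :=
  mctx_idem x /\ exists (m : M) (n : N), x = MCtx 1 m n 0.
End MoritaOps.

Definition mctx_ring_iso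
  (R S : nzRingType) (M N : zmodType)
  (lM : R -> M -> M) (rM : M -> S -> M) (lN : S -> N -> N) (rN : N -> R -> N)
  (R' S' : nzRingType) (M' N' : zmodType)
  (lM' : R' -> M' -> M') (rM' : M' -> S' -> M')
  (lN' : S' -> N' -> N') (rN' : N' -> R' -> N')
  (phi : mctx R S M N -> mctx R' S' M' N') : Prop :=
  bijective phi /\
  (forall x y, phi (mctx_add x y) = mctx_add (phi x) (phi y)) /\
  (forall x y, phi (mctx_mul lM rM lN rN x y)
               = mctx_mul lM' rM' lN' rN' (phi x) (phi y)) /\
  phi (mctx_one R S M N) = mctx_one R' S' M' N'.

(* Main.v *)
Require Import Defs.
From HB Require Import structures.
From mathcomp Require Import all_boot all_algebra.
Local Open Scope ring_scope.
Import GRing.Theory.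

Lemma dbl0 (M : zmodType) (x : M) : x = x + x -> x = 0.
Proof. by move=> h; apply: (@addrI _ x); rewrite addr0 -h. Qed.

Lemma bim_l0 (R S : nzRingType) (M : zmodType) (l : R -> M -> M) (r : M -> S -> M) :
  is_bimod l r -> forall a, l a 0 = 0.
Proof.
move=> [h1 _] a; have := h1 a 0 0; rewrite addr0; exact: dbl0.
Qed.

Lemma bim_0l (R S : nzRingType) (M : zmodType) (l : R -> M -> M) (r : M -> S -> M) :
  is_bimod l r -> forall m, l 0 m = 0.
Proof.
move=> [_ [h2 _]] m; have := h2 0 0 m; rewrite addr0; exact: dbl0.
Qed.

Lemma bim_r0 (R S : nzRingType) (M : zmodType) (l : R -> M -> M) (r : M -> S -> M) :
  is_bimod l r -> forall m, r m 0 = 0.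
Proof.
move=> [_ [_ [_ [_ [_ [h6 _]]]]]] m; have := h6 m 0 0; rewrite addr0; exact: dbl0.
Qed.

Lemma bim_0r (R S : nzRingType) (M : zmodType) (l : R -> M -> M) (r : M -> S -> M) :
  is_bimod l r -> forall s, r 0 s = 0.
Proof.
move=> [_ [_ [_ [_ [h5 _]]]]] s; have := h5 0 0 s; rewrite addr0; exact: dbl0.
Qed.

Lemma bim_l1 (R S : nzRingType) (M : zmodType) (l : R -> M -> M) (r : M -> S -> M) :
  is_bimod l r -> forall m, l 1 m = m.
Proof. by move=> [_ [_ [_ [h _]]]]. Qed.

Lemma bim_r1 (R S : nzRingType) (M : zmodType) (l : R -> M -> M) (r : M -> S -> M) :
  is_bimod l r -> forall m, r m 1 = m.
Proof. by move=> [_ [_ [_ [_ [_ [_ [_ [h _]]]]]]]]. Qed.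

Arguments bim_l0 {R S M l r}.
Arguments bim_0l {R S M l r}.
Arguments bim_r0 {R S M l r}.
Arguments bim_0r {R S M l r}.
Arguments bim_l1 {R S M l r}.
Arguments bim_r1 {R S M l r}.

Theorem lemma4p1
  (R S R' S' : nzRingType) (M N M' N' : zmodType)
  (lM : R -> M -> M) (rM : M -> S -> M) (lN : S -> N -> N) (rN : N -> R -> N)
  (lM' : R' -> M' -> M') (rM' : M' -> S' -> M')
  (lN' : S' -> N' -> N') (rN' : N' -> R' -> N')
  (hR : only_trivial_idem R) (hS : only_trivial_idem S)
  (hR' : only_trivial_idem R') (hS' : only_trivial_idem S')
  (hM : is_bimod lM rM) (hN : is_bimod lN rN)
  (hM' : is_bimod lM' rM') (hN' : is_bimod lN' rN')
  (phi : mctx R S M N -> mctx R' S' M' N')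
  (hphi : mctx_ring_iso lM rM lN rN lM' rM' lN' rN' phi)
  (hm1 : exists m1 : M,
     type2_idem lM' rM' lN' rN' (phi (MCtx 1 m1 (0 : N) (0 : S)))) :
  (forall m : M, type2_idem lM' rM' lN' rN' (phi (MCtx 1 m (0 : N) (0 : S)))) /\
  (exists (a2 : M') (v2 : M -> N'),
     forall m : M, phi (MCtx 1 m (0 : N) (0 : S)) = MCtx 0 a2 (v2 m) 1).
Proof.
case: hphi => _ [_ [hmul _]].
case: hm1 => m1 [_ [a2 [n2 Hy]]].
pose e := fun m : M => MCtx (1:R) m (0 : N) (0 : S).
have ee : forall m m', mctx_mul lM rM lN rN (e m) (e m') = e m'.
  move=> m m'; rewrite /e /mctx_mul /=.
  by rewrite mulr1 mulr0 (bim_l1 hM) (bim_r0 hM) (bim_0r hN) (bim_l0 hN) !addr0.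
have key : forall m, phi (e m) = MCtx 0 a2 (m21 (phi (e m))) 1 /\
    mctx_idem lM' rM' lN' rN' (phi (e m)).
  move=> m.
  have Hxx : mctx_idem lM' rM' lN' rN' (phi (e m)) by rewrite /mctx_idem -hmul ee.
  have Hxy := ee m m1; have Hyx := ee m1 m.
  move: Hxy Hyx; rewrite /e => Hxy Hyx.
  move: (f_equal phi Hxy) (f_equal phi Hyx); rewrite !hmul Hy.
  case: (phi (MCtx 1 m 0 0)) Hxx => r a b s Hxx.
  rewrite /mctx_mul /= => E1 E2.
  case: E2 => E2r _ _ _; case: E1 => _ E1m _ E1s.
  rewrite mul0r in E2r; rewrite mulr1 in E1s.
  rewrite -E2r (bim_0l hM') add0r (bim_r1 hM') in E1m.
  by rewrite -E2r E1m E1s in Hxx *; split.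
split.
  move=> m; have [H1 H2] := key m; split => //; by exists a2, (m21 (phi (e m))).
exists a2, (fun m => m21 (phi (e m))) => m; exact: (key m).1.
Qed.
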